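(* Let $\mathbb{R}^{\mathbb{N}}_B$ be the ring of bounded real sequences, let $o=\{f\in\mathbb{R}^{\mathbb{N}}: \lim_{n\to\infty} n f(n)=0\}$, and let $\mathbb{R}_{\mathcal F}^{\circ}=\mathbb{R}^{\mathbb{N}}_B/o$. Then: (1) $\mathbb{R}_{\mathcal F}^{\circ}$ is a partially ordered ring; (2) there are nonzero infinitesimals in $\mathbb{R}_{\mathcal F}^{\circ}$; (3) $\mathbb{R}_{\mathcal F}^{\circ}$ has nonzero nilpotent elements and, as a consequence, it has zero-divisors.
   Context: $o$ is an ideal of the ring $\mathbb{R}^{\mathbb{N}}_B$ (pointwise operations). Elements of the quotient are classes $[x]_o$ with operations $[x]_o+[y]_o=[x+y]_o$, $[x]_o[y]_o=[xy]_o$, and order $[x]_o\le_o[y]_o$ iff there exist $z\in o$ and $\bar n\in\mathbb{N}$ with $x_n\le y_n+z_n$ for all $n\ge\bar n$. The reals embed via constant sequences. For an ordered ring $R\supseteq\mathbb{R}$, an element $r\in R$ is infinitesimal iff $-1/n\le r\le 1/n$ for all $n\in\mathbb{N}$. *)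

(* Defs.v *)
From Stdlib Require Export Reals Lra.
Open Scope R_scope.

Definition seqR := nat -> R.

Definition bounded (x : seqR) : Prop := exists M : R, forall n, Rabs (x n) <= M.

Definition sadd (x y : seqR) : seqR := fun n => x n + y n.
Definition smul (x y : seqR) : seqR := fun n => x n * y n.
Definition sopp (x : seqR) : seqR := fun n => - x n.
Definition scst (r : R) : seqR := fun _ => r.
Definition spow (x : seqR) (k : nat) : seqR := fun n => x n ^ k.

Definition in_o (f : seqR) : Prop := Un_cv (fun n => INR n * f n) 0.

(* equality in the quotient R^N_B / o : [x]_o = [y]_o *)
Definition eqo (x y : seqR) : Prop := in_o (fun n => x n - y n).

Definition leo (x y : seqR) : Prop :=
  exists z, in_o z /\ exists N : nat, forall n, (N <= n)%nat -> x n <= y n + z n.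

Definition infinitesimal_o (x : seqR) : Prop :=
  forall n : nat,
    leo (sopp (scst (1 / INR (S n)))) x /\ leo x (scst (1 / INR (S n))).

(* Main.v *)
Require Import Defs.
From Stdlib Require Import Lia Psatz.


Lemma in_o_unf f : in_o f ->
  forall eps, eps > 0 -> exists N, forall n, (n >= N)%nat -> Rabs (INR n * f n) < eps.
Proof.
  intros H eps He. destruct (H eps He) as [N HN]. exists N. intros n Hn.
  specialize (HN n Hn). unfold R_dist in HN. rewrite Rminus_0_r in HN. exact HN.
Qed.

Lemma in_o_fold f :
  (forall eps, eps > 0 -> exists N, forall n, (n >= N)%nat -> Rabs (INR n * f n) < eps)
  -> in_o f.
Proof.
  intros H eps He. destruct (H eps He) as [N HN]. exists N. intros n Hn.
  unfold R_dist. rewrite Rminus_0_r. auto.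
Qed.

Lemma in_o_dom f g : in_o g ->
  (exists N, forall n, (n >= N)%nat -> Rabs (f n) <= Rabs (g n)) -> in_o f.
Proof.
  intros Hg [N HN]. apply in_o_fold. intros eps He.
  destruct (in_o_unf g Hg eps He) as [N1 H1]. exists (Nat.max N N1). intros n Hn.
  specialize (H1 n ltac:(lia)). specialize (HN n ltac:(lia)).
  rewrite Rabs_mult in *. rewrite (Rabs_pos_eq (INR n)) in * by apply pos_INR.
  apply Rle_lt_trans with (INR n * Rabs (g n)); auto.
  apply Rmult_le_compat_l; auto. apply pos_INR.
Qed.

Lemma in_o_add f g : in_o f -> in_o g -> in_o (fun n => f n + g n).
Proof.
  intros Hf Hg. apply in_o_fold. intros eps He.
  destruct (in_o_unf f Hf (eps/2) ltac:(lra)) as [N1 H1].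
  destruct (in_o_unf g Hg (eps/2) ltac:(lra)) as [N2 H2].
  exists (Nat.max N1 N2). intros n Hn.
  specialize (H1 n ltac:(lia)). specialize (H2 n ltac:(lia)).
  rewrite Rmult_plus_distr_l.
  eapply Rle_lt_trans. apply Rabs_triang. lra.
Qed.

Lemma in_o_scal c f : in_o f -> in_o (fun n => c * f n).
Proof.
  intros Hf. apply in_o_fold. intros eps He.
  assert (Hc : Rabs c + 1 > 0) by (pose proof (Rabs_pos c); lra).
  destruct (in_o_unf f Hf (eps / (Rabs c + 1))) as [N H1].
  { apply Rdiv_lt_0_compat; lra. }
  exists N. intros n Hn. specialize (H1 n Hn).
  replace (INR n * (c * f n)) with (c * (INR n * f n)) by ring.
  rewrite Rabs_mult.
  apply Rle_lt_trans with ((Rabs c + 1) * Rabs (INR n * f n)).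
  { apply Rmult_le_compat_r. apply Rabs_pos. lra. }
  apply Rmult_lt_compat_l with (r := Rabs c + 1) in H1; auto.
  replace ((Rabs c + 1) * (eps / (Rabs c + 1))) with eps in H1 by (field; lra).
  exact H1.
Qed.

Lemma in_o_abs f : in_o f -> in_o (fun n => Rabs (f n)).
Proof.
  intros H. apply (in_o_dom _ f H). exists 0%nat. intros. rewrite Rabs_Rabsolu. lra.
Qed.

Lemma sum_ge (f : nat -> R) k m : (k <= m)%nat -> Rabs (f k) <= sum_f_R0 (fun i => Rabs (f i)) m.
Proof.
  induction m; intros Hk.
  - assert (k = 0%nat) by lia. subst. simpl. lra.
  - simpl. destruct (Nat.eq_dec k (S m)).
    + subst. assert (0 <= sum_f_R0 (fun i => Rabs (f i)) m).
      { apply cond_pos_sum. intros; apply Rabs_pos. }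
      lra.
    + specialize (IHm ltac:(lia)). pose proof (Rabs_pos (f (S m))). lra.
Qed.

Lemma bnd_nonneg (x : seqR) M : (forall n, Rabs (x n) <= M) -> 0 <= M.
Proof. intros H. specialize (H 0%nat). pose proof (Rabs_pos (x 0%nat)). lra. Qed.

Definition xs : seqR := fun n => / (INR n + 1).

Lemma xs_facts n : xs n > 0 /\ xs n * (INR n + 1) = 1.
Proof.
  unfold xs. pose proof (pos_INR n). split.
  - apply Rinv_0_lt_compat. lra.
  - field. lra.
Qed.

Lemma xs_bounded : bounded xs.
Proof.
  exists 1. intros n. destruct (xs_facts n) as [H1 H2]. pose proof (pos_INR n).
  rewrite Rabs_pos_eq by lra. nra.
Qed.

Lemma xs_nonzero : ~ eqo xs (scst 0).
Proof.
  intros H. destruct (in_o_unf _ H (1/2) ltac:(lra)) as [N HN].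
  specialize (HN (S N) ltac:(lia)). unfold scst in HN.
  rewrite Rminus_0_r in HN. destruct (xs_facts (S N)) as [H1 H2].
  rewrite S_INR in *. pose proof (pos_INR N).
  rewrite Rabs_pos_eq in HN by nra. nra.
Qed.

Lemma xs_sq : eqo (spow xs 2) (scst 0).
Proof.
  apply in_o_fold. intros eps He.
  destruct (INR_archimed eps 1 He) as [N HN]. exists N. intros n Hn.
  unfold spow, scst. rewrite Rminus_0_r.
  destruct (xs_facts n) as [H1 H2]. pose proof (pos_INR n).
  assert (INR N <= INR n) by (apply le_INR; lia).
  rewrite Rabs_pos_eq by nra. simpl.
  assert (xs n * eps * (INR n + 1) = eps) by (rewrite Rmult_assoc, (Rmult_comm eps), <- Rmult_assoc, H2; ring).
  nra.
Qed.

Theorem mainTheorem2 :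
  (* (1) R_F = R^N_B / o is a partially ordered ring *)
  ( (* R^N_B is a subring of R^N containing the constants *)
    (forall r, bounded (scst r)) /\
    (forall x y, bounded x -> bounded y -> bounded (sadd x y)) /\
    (forall x, bounded x -> bounded (sopp x)) /\
    (forall x y, bounded x -> bounded y -> bounded (smul x y)) /\
    (* o is an ideal of R^N_B, so the quotient is a ring *)
    (forall f, in_o f -> bounded f) /\
    in_o (scst 0) /\
    (forall f g, in_o f -> in_o g -> in_o (sadd f g)) /\
    (forall f, in_o f -> in_o (sopp f)) /\
    (forall x f, bounded x -> in_o f -> in_o (smul x f)) /\
    (* <=_o is well defined on classes *)
    (forall x x' y y', bounded x -> bounded x' -> bounded y -> bounded y' ->
       eqo x x' -> eqo y y' -> leo x y -> leo x' y') /\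
    (* <=_o is a partial order on the quotient *)
    (forall x, bounded x -> leo x x) /\
    (forall x y z, bounded x -> bounded y -> bounded z ->
       leo x y -> leo y z -> leo x z) /\
    (forall x y, bounded x -> bounded y -> leo x y -> leo y x -> eqo x y) /\
    (* compatibility with the ring operations *)
    (forall x y z, bounded x -> bounded y -> bounded z ->
       leo x y -> leo (sadd x z) (sadd y z)) /\
    (forall x y, bounded x -> bounded y ->
       leo (scst 0) x -> leo (scst 0) y -> leo (scst 0) (smul x y)) ) /\
  (* (2) there are nonzero infinitesimals *)
  (exists x, bounded x /\ ~ eqo x (scst 0) /\ infinitesimal_o x) /\
  (* (3) nonzero nilpotents, hence zero-divisors *)
  (exists x k, bounded x /\ ~ eqo x (scst 0) /\ eqo (spow x k) (scst 0)) /\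
  (exists x y, bounded x /\ bounded y /\ ~ eqo x (scst 0) /\ ~ eqo y (scst 0) /\
     eqo (smul x y) (scst 0)).
Proof.
  split; [repeat split|].
  - intros r. exists (Rabs r). intros. unfold scst. lra.
  - intros x y [Mx Hx] [My Hy]. exists (Mx + My). intros n. unfold sadd.
    eapply Rle_trans. apply Rabs_triang. specialize (Hx n). specialize (Hy n). lra.
  - intros x [M H]. exists M. intros n. unfold sopp. rewrite Rabs_Ropp. auto.
  - intros x y [Mx Hx] [My Hy]. exists (Mx * My). intros n. unfold smul.
    rewrite Rabs_mult. apply Rmult_le_compat; auto using Rabs_pos.
  - intros f Hf. destruct (in_o_unf f Hf 1 ltac:(lra)) as [N HN].
    exists (1 + sum_f_R0 (fun i => Rabs (f i)) (S N)). intros n.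
    assert (0 <= sum_f_R0 (fun i => Rabs (f i)) (S N)).
    { apply cond_pos_sum. intros; apply Rabs_pos. }
    destruct (Compare_dec.le_lt_dec n (S N)).
    + pose proof (sum_ge f n (S N) l). lra.
    + specialize (HN n ltac:(lia)). rewrite Rabs_mult, Rabs_pos_eq in HN by apply pos_INR.
      assert (1 <= INR n) by (apply (le_INR 1); lia).
      pose proof (Rabs_pos (f n)). nra.
  - apply in_o_fold. intros eps He. exists 0%nat. intros. unfold scst.
    rewrite Rmult_0_r, Rabs_R0. lra.
  - intros f g Hf Hg. apply (in_o_add f g Hf Hg).
  - intros f Hf. apply (in_o_dom _ f Hf). exists 0%nat. intros. unfold sopp.
    rewrite Rabs_Ropp. lra.
  - intros x f [M HM] Hf. apply (in_o_dom _ _ (in_o_scal M f Hf)). exists 0%nat.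
    intros n _. unfold smul. rewrite !Rabs_mult. pose proof (bnd_nonneg _ _ HM).
    rewrite (Rabs_pos_eq M) by lra. apply Rmult_le_compat_r. apply Rabs_pos. auto.
  - intros x x' y y' _ _ _ _ Hx Hy [z [Hz [N HN]]].
    exists (fun n => z n + (x' n - x n) + (y n - y' n)). split.
    + apply in_o_add; [apply in_o_add|]; auto.
      apply (in_o_dom _ _ Hx). exists 0%nat. intros. rewrite Rabs_minus_sym. lra.
    + exists N. intros n Hn. specialize (HN n Hn). lra.
  - intros x _. exists (scst 0). split.
    + apply in_o_fold. intros eps He. exists 0%nat. intros. unfold scst.
      rewrite Rmult_0_r, Rabs_R0. lra.
    + exists 0%nat. intros. unfold scst. lra.
  - intros x y w _ _ _ [z1 [H1 [N1 HN1]]] [z2 [H2 [N2 HN2]]].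
    exists (fun n => z1 n + z2 n). split. apply in_o_add; auto.
    exists (Nat.max N1 N2). intros n Hn.
    specialize (HN1 n ltac:(lia)). specialize (HN2 n ltac:(lia)). lra.
  - intros x y _ _ [z1 [H1 [N1 HN1]]] [z2 [H2 [N2 HN2]]].
    apply (in_o_dom _ _ (in_o_add _ _ (in_o_abs _ H1) (in_o_abs _ H2))).
    exists (Nat.max N1 N2). intros n Hn.
    specialize (HN1 n ltac:(lia)). specialize (HN2 n ltac:(lia)).
    pose proof (Rabs_pos (z1 n)). pose proof (Rabs_pos (z2 n)).
    rewrite (Rabs_pos_eq (Rabs (z1 n) + Rabs (z2 n))) by lra.
    pose proof (Rle_abs (z1 n)). pose proof (Rle_abs (z2 n)).
    apply Rabs_le. lra.
  - intros x y w _ _ _ [z [Hz [N HN]]]. exists z. split; auto.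
    exists N. intros n Hn. specialize (HN n Hn). unfold sadd. lra.
  - intros x y [Mx Hx] [My Hy] [z1 [H1 [N1 HN1]]] [z2 [H2 [N2 HN2]]].
    set (M := Mx + My).
    assert (0 <= Mx) by exact (bnd_nonneg _ _ Hx).
    assert (0 <= My) by exact (bnd_nonneg _ _ Hy).
    assert (HM0 : 0 <= M) by (unfold M; lra). assert (HMx : Mx <= M) by (unfold M; lra). assert (HMy : My <= M) by (unfold M; lra). clearbody M.
    exists (fun n => M * (Rabs (z1 n) + Rabs (z2 n))). split.
    + apply in_o_scal. apply in_o_add; apply in_o_abs; auto.
    + exists (Nat.max N1 N2). intros n Hn.
      specialize (HN1 n ltac:(lia)). specialize (HN2 n ltac:(lia)).
      unfold scst, smul in *.
      assert (Ax : Rabs (x n) <= M) by (specialize (Hx n); lra).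
      assert (Ay : Rabs (y n) <= M) by (specialize (Hy n); lra).
      pose proof (Rabs_pos (z1 n)). pose proof (Rabs_pos (z2 n)).
      pose proof (Rle_abs (- z1 n)). pose proof (Rle_abs (- z2 n)).
      rewrite Rabs_Ropp in *. pose proof (Rle_abs (z1 n)). pose proof (Rle_abs (z2 n)).
      destruct (Rle_dec 0 (x n)); destruct (Rle_dec 0 (y n)).
      * assert (0 <= x n * y n) by (apply Rmult_le_pos; lra). assert (0 <= M * (Rabs (z1 n) + Rabs (z2 n))) by (apply Rmult_le_pos; lra). lra.
      * rewrite (Rabs_pos_eq (x n)) in Ax by lra.
        assert (x n * (- y n) <= M * Rabs (z2 n)) by (apply Rmult_le_compat; lra).
        assert (0 <= M * Rabs (z1 n)) by (apply Rmult_le_pos; lra). nra.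
      * rewrite (Rabs_pos_eq (y n)) in Ay by lra.
        assert ((- x n) * y n <= Rabs (z1 n) * M) by (apply Rmult_le_compat; lra).
        assert (0 <= M * Rabs (z2 n)) by (apply Rmult_le_pos; lra). nra.
      * assert (0 <= x n * y n) by nra.
        assert (0 <= M * (Rabs (z1 n) + Rabs (z2 n))) by (apply Rmult_le_pos; lra). lra.
  - split; [|split].
    + exists xs. split; [exact xs_bounded|split; [exact xs_nonzero|]].
      intros k. assert (Hk : INR (S k) > 0) by (apply lt_0_INR; lia). split.
      * exists (scst 0). split.
        -- apply in_o_fold. intros eps He. exists 0%nat. intros. unfold scst.
           rewrite Rmult_0_r, Rabs_R0. lra.
        -- exists 0%nat. intros n _. unfold sopp, scst.
           destruct (xs_facts n). assert (0 < 1 / INR (S k)).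
           { apply Rdiv_lt_0_compat; lra. } lra.
      * exists (scst 0). split.
        -- apply in_o_fold. intros eps He. exists 0%nat. intros. unfold scst.
           rewrite Rmult_0_r, Rabs_R0. lra.
        -- exists k. intros n Hn. unfold scst, xs. rewrite Rplus_0_r.
           unfold Rdiv. rewrite Rmult_1_l. apply Rinv_le_contravar. lra.
           rewrite S_INR. assert (INR k <= INR n) by (apply le_INR; lia). lra.
    + exists xs, 2%nat. split; [exact xs_bounded|split; [exact xs_nonzero|exact xs_sq]].
    + exists xs, xs. repeat split; try exact xs_bounded; try exact xs_nonzero.
      apply (in_o_dom _ _ xs_sq). exists 0%nat. intros. unfold smul, spow, scst.
      simpl. rewrite Rmult_1_r. lra.
Qed.
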